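(* Let $H\subset K\subset G$ be compact Lie groups with Lie algebras $\mathfrak{h}\subset\mathfrak{k}\subset\mathfrak{g}$, let $g_0$ be a bi-invariant metric on $G$, let $\mathfrak{p}$ be the $g_0$-orthogonal complement of $\mathfrak{h}$ in $\mathfrak{g}$, $\mathfrak{m}$ the $g_0$-orthogonal complement of $\mathfrak{h}$ in $\mathfrak{k}$, and $\mathfrak{s}$ the $g_0$-orthogonal complement of $\mathfrak{k}$ in $\mathfrak{g}$. Suppose there exists $C>0$ such that for all $X,Y\in\mathfrak{p}$, $|X^{\mathfrak{m}}\wedge Y^{\mathfrak{m}}|\leq C\cdot|[X,Y]|$. Let $\Psi:\mathfrak{g}\to\mathfrak{g}$ be a $g_0$-self-adjoint, $\mathrm{Ad}_H$-equivariant endomorphism with $\Psi|_{\mathfrak{s}}=\Psi|_{\mathfrak{h}}=0$, and for $t$ with $I-t\Psi$ positive definite let $g_t$ be the left-invariant metric on $G$ given by $g_t(A,B)=g_0((I-t\Psi)^{-1}A,B)$ for $A,B\in\mathfrak{g}$. Then there exists $\epsilon>0$ such that for all $t\in[0,\epsilon)$, every plane spanned by two vectors of $\mathfrak{p}$ (as left-invariant vector fields, i.e. in $T_eG\cong\mathfrak{g}$) has nonnegative sectional curvature with respect to $g_t$.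
   Context: For a subspace $\mathfrak{v}\subset\mathfrak{g}$ and $A\in\mathfrak{g}$, $A^{\mathfrak{v}}$ denotes the $g_0$-orthogonal projection onto $\mathfrak{v}$; norms are with respect to $g_0$, and the norm on $\wedge^2\mathfrak{m}$ is induced by $g_0$. *)

(* Defs.v *)
From HB Require Import structures.
From mathcomp Require Import all_boot all_order all_algebra.
From mathcomp Require Import all_classical all_reals all_analysis.
Set Implicit Arguments. Unset Strict Implicit. Unset Printing Implicit Defensive.
Import Order.TTheory GRing.Theory Num.Theory.
Local Open Scope ring_scope.

(* The Lie algebra g is modelled as R^n (row vectors), with the bi-invariant
   metric g0 being the standard dot product (i.e. we work in a g0-orthonormal
   basis).  Linear endomorphisms act on the right: x |-> x *m M. *)

Definition dot {R : realType} {n : nat} (u v : 'rV[R]_n) : R := (u *m v^T) 0 0.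

Definition vnorm {R : realType} {n : nat} (u : 'rV[R]_n) : R := Num.sqrt (dot u u).

(* |a /\ b| for the norm on wedge^2 induced by g0 (Gram determinant). *)
Definition wedge_norm {R : realType} {n : nat} (a b : 'rV[R]_n) : R :=
  Num.sqrt (dot a a * dot b b - dot a b ^+ 2).

Definition is_lie_bracket {R : realType} {n : nat}
  (br : 'rV[R]_n -> 'rV[R]_n -> 'rV[R]_n) : Prop :=
  (forall (a : R) x y z, br (a *: x + y) z = a *: br x z + br y z) /\
  (forall x y, br x y = - br y x) /\
  (forall x y z, br x (br y z) + br y (br z x) + br z (br x y) = 0).

(* g0 is bi-invariant, i.e. ad-invariant on the Lie algebra *)
Definition ad_invariant {R : realType} {n : nat}
  (br : 'rV[R]_n -> 'rV[R]_n -> 'rV[R]_n) : Prop :=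
  forall x y z, dot (br x y) z = dot x (br y z).

Definition subalgebra {R : realType} {n : nat}
  (br : 'rV[R]_n -> 'rV[R]_n -> 'rV[R]_n) (V : 'M[R]_n) : Prop :=
  forall x y, (x <= V)%MS -> (y <= V)%MS -> (br x y <= V)%MS.

Definition orthsp {R : realType} {n : nat} (V : 'M[R]_n) (x : 'rV[R]_n) : Prop :=
  x *m V^T = 0.

Definition in_p {R : realType} {n : nat} (h : 'M[R]_n) (x : 'rV[R]_n) : Prop :=
  orthsp h x.
Definition in_m {R : realType} {n : nat} (h k : 'M[R]_n) (x : 'rV[R]_n) : Prop :=
  (x <= k)%MS /\ orthsp h x.
Definition in_s {R : realType} {n : nat} (k : 'M[R]_n) (x : 'rV[R]_n) : Prop :=
  orthsp k x.

Definition is_oproj {R : realType} {n : nat} (P : 'rV[R]_n -> Prop)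
  (x y : 'rV[R]_n) : Prop :=
  P y /\ forall z, P z -> dot (x - y) z = 0.

(* matrix of ad_Z : x |-> [Z, x]  (x *m adm br Z = br Z x for bilinear br) *)
Definition adm {R : realType} {n : nat}
  (br : 'rV[R]_n -> 'rV[R]_n -> 'rV[R]_n) (Z : 'rV[R]_n) : 'M[R]_n :=
  \matrix_(i, j) (br Z (delta_mx 0 i)) 0 j.

Definition posdef {R : realType} {n : nat} (M : 'M[R]_n) : Prop :=
  forall x : 'rV[R]_n, x != 0 -> 0 < (x *m M *m x^T) 0 0.

Definition ipQ {R : realType} {n : nat} (Q : 'M[R]_n) (u v : 'rV[R]_n) : R :=
  (u *m Q *m v^T) 0 0.

Definition gt_mx {R : realType} {n : nat} (Psi : 'M[R]_n) (t : R) : 'M[R]_n :=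
  invmx (1%:M - t *: Psi).

(* Levi-Civita connection on left-invariant fields (Koszul formula):
   2 Q(nabla_X Y, Z) = Q([X,Y],Z) - Q([Y,Z],X) + Q([Z,X],Y). *)
Definition levi_civita {R : realType} {n : nat} (Q : 'M[R]_n)
  (br : 'rV[R]_n -> 'rV[R]_n -> 'rV[R]_n) (X Y : 'rV[R]_n) : 'rV[R]_n :=
  (\row_j ((ipQ Q (br X Y) (delta_mx 0 j) - ipQ Q (br Y (delta_mx 0 j)) X
            + ipQ Q (br (delta_mx 0 j) X) Y) / 2)) *m invmx Q.

Definition curv {R : realType} {n : nat} (Q : 'M[R]_n)
  (br : 'rV[R]_n -> 'rV[R]_n -> 'rV[R]_n) (X Y Z : 'rV[R]_n) : 'rV[R]_n :=
  levi_civita Q br X (levi_civita Q br Y Z) - levi_civita Q br Y (levi_civita Q br X Z)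
  - levi_civita Q br (br X Y) Z.

Definition sec_curv {R : realType} {n : nat} (Q : 'M[R]_n)
  (br : 'rV[R]_n -> 'rV[R]_n -> 'rV[R]_n) (X Y : 'rV[R]_n) : R :=
  ipQ Q (curv Q br X Y Y) X / (ipQ Q X X * ipQ Q Y Y - ipQ Q X Y ^+ 2).

Definition mxT (R : realType) (n : nat) : normedModType R := 'M[R]_n.

(* AdH = Ad(H) subset of GL(g): a compact group of g0-orthogonal Lie algebra
   automorphisms preserving h and k, whose Lie algebra is ad(h). *)
Definition is_AdH {R : realType} {n : nat}
  (br : 'rV[R]_n -> 'rV[R]_n -> 'rV[R]_n) (h k : 'M[R]_n) (AdH : set 'M[R]_n) : Prop :=
  [/\ AdH 1%:M /\ (forall a b, AdH a -> AdH b -> AdH (a *m b)),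
      @compact (mxT R n) AdH,
      (forall a, AdH a ->
         [/\ a *m a^T = 1%:M,
             (forall x y, br (x *m a) (y *m a) = br x y *m a),
             (h *m a <= h)%MS & (k *m a <= k)%MS]),
      (forall Z, (Z <= h)%MS -> exists c : R -> 'M[R]_n,
         [/\ (forall s, AdH (c s)), c 0 = 1%:M, derivable c 0 1 & 'D_1 c 0 = adm br Z])
    & (forall c : R -> 'M[R]_n, (forall s, AdH (c s)) -> c 0 = 1%:M -> derivable c 0 1 ->
         exists2 Z, (Z <= h)%MS & 'D_1 c 0 = adm br Z)].

(* Main.v *)
Require Import Defs.
From HB Require Import structures.
From mathcomp Require Import all_boot all_order all_algebra.
From mathcomp Require Import all_classical all_reals all_analysis.
From mathcomp Require Import ring lra.
Import Order.TTheory GRing.Theory Num.Theory.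
Local Open Scope ring_scope.
Set Implicit Arguments. Unset Strict Implicit. Unset Printing Implicit Defensive.


Section Dot.
Variables (R : realType) (n : nat).
Implicit Types (u v w : 'rV[R]_n) (M : 'M[R]_n).

Lemma dotE u v : dot u v = \sum_j u 0 j * v 0 j.
Proof. by rewrite /dot mxE; apply: eq_bigr => j _; rewrite mxE. Qed.

Lemma dotC u v : dot u v = dot v u.
Proof. by rewrite !dotE; apply: eq_bigr => j _; rewrite mulrC. Qed.

Lemma dotDl u v w : dot (u + v) w = dot u w + dot v w.
Proof. by rewrite /dot mulmxDl mxE. Qed.
Lemma dotDr u v w : dot u (v + w) = dot u v + dot u w.
Proof. by rewrite dotC dotDl !(dotC u). Qed.
Lemma dotZl (a : R) u v : dot (a *: u) v = a * dot u v.
Proof. by rewrite /dot -scalemxAl mxE. Qed.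
Lemma dotZr (a : R) u v : dot u (a *: v) = a * dot u v.
Proof. by rewrite dotC dotZl dotC. Qed.
Lemma dotNl u v : dot (- u) v = - dot u v.
Proof. by rewrite -scaleN1r dotZl mulN1r. Qed.
Lemma dotNr u v : dot u (- v) = - dot u v.
Proof. by rewrite dotC dotNl dotC. Qed.
Lemma dotBl u v w : dot (u - v) w = dot u w - dot v w.
Proof. by rewrite dotDl dotNl. Qed.
Lemma dotBr u v w : dot u (v - w) = dot u v - dot u w.
Proof. by rewrite dotDr dotNr. Qed.
Lemma dot0l u : dot 0 u = 0.
Proof. by rewrite /dot mul0mx mxE. Qed.
Lemma dot0r u : dot u 0 = 0.
Proof. by rewrite dotC dot0l. Qed.
Lemma dotMl u v M : dot (u *m M) v = dot u (v *m M^T).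
Proof. by rewrite /dot trmx_mul trmxK mulmxA. Qed.
Lemma dotMr u v M : dot u (v *m M) = dot (u *m M^T) v.
Proof. by rewrite dotMl trmxK. Qed.
Lemma dot_ge0 u : 0 <= dot u u.
Proof. by rewrite dotE; apply: sumr_ge0 => j _; rewrite -expr2 sqr_ge0. Qed.
Lemma dot_eq0 u : dot u u = 0 -> u = 0.
Proof.
rewrite dotE => /eqP; rewrite psumr_eq0 => [/allP H|j _]; last by rewrite -expr2 sqr_ge0.
apply/rowP => j; rewrite mxE.
have := H j (mem_index_enum j); rewrite -expr2 sqrf_eq0 => /eqP ->. done.
Qed.
Lemma dot_delta j u : dot (delta_mx 0 j) u = u 0 j.
Proof.
rewrite dotE (bigD1 j) //= big1 => [|i /negPf ij]; rewrite !mxE ?eqxx ?ij /=.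
  by rewrite mul1r addr0.
by rewrite mul0r.
Qed.
Lemma row_dotE u : \row_j dot (delta_mx 0 j) u = u.
Proof. by apply/rowP => j; rewrite mxE dot_delta. Qed.

End Dot.


Section Br.
Variables (R : realType) (n : nat) (br : 'rV[R]_n -> 'rV[R]_n -> 'rV[R]_n).
Hypothesis hL : is_lie_bracket br.
Implicit Types (x y z u v w : 'rV[R]_n).

Lemma brlin (a : R) x y z : br (a *: x + y) z = a *: br x z + br y z.
Proof. by case: hL. Qed.
Lemma brC x y : br x y = - br y x.
Proof. by case: hL => _ []. Qed.
Lemma jacobi x y z : br x (br y z) + br y (br z x) + br z (br x y) = 0.
Proof. by case: hL => _ []. Qed.
Lemma brDl x y z : br (x + y) z = br x z + br y z.
Proof. by have := brlin 1 x y z; rewrite !scale1r. Qed.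
Lemma br0l z : br 0 z = 0.
Proof. have H := brDl 0 0 z; rewrite addr0 in H.
by apply: (addrI (br 0 z)); rewrite -H addr0. Qed.
Lemma brZl (a : R) x z : br (a *: x) z = a *: br x z.
Proof. by rewrite -(addr0 (a *: x)) brlin br0l addr0. Qed.
Lemma brNl x z : br (- x) z = - br x z.
Proof. by rewrite -scaleN1r brZl scaleN1r. Qed.
Lemma brBl x y z : br (x - y) z = br x z - br y z.
Proof. by rewrite brDl brNl. Qed.
Lemma brDr x y z : br z (x + y) = br z x + br z y.
Proof. by rewrite brC brDl opprD -!brC. Qed.
Lemma brZr (a : R) x z : br z (a *: x) = a *: br z x.
Proof. by rewrite brC brZl -scalerN -brC. Qed.
Lemma brNr x z : br z (- x) = - br z x.
Proof. by rewrite -scaleN1r brZr scaleN1r. Qed.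
Lemma brBr x y z : br z (x - y) = br z x - br z y.
Proof. by rewrite brDr brNr. Qed.
Lemma br0r z : br z 0 = 0.
Proof. by rewrite brC br0l oppr0. Qed.
Lemma brxx x : br x x = 0.
Proof.
have : br x x + br x x = 0 by rewrite {1}brC addNr.
by rewrite -mulr2n -scaler_nat => /eqP; rewrite scaler_eq0 pnatr_eq0 /= => /eqP.
Qed.

Hypothesis hI : ad_invariant br.
Lemma adinv x y z : dot (br x y) z = dot x (br y z).
Proof. exact: hI. Qed.
Lemma adinv2 x y z : dot x (br y z) = - dot y (br x z).
Proof. by rewrite -adinv brC dotNl adinv. Qed.
Lemma dot_br_self x y : dot x (br x y) = 0.
Proof. by rewrite -adinv brxx dot0l. Qed.
Lemma dot_br_self2 x y : dot x (br y x) = 0.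
Proof. by rewrite brC dotNr dot_br_self oppr0. Qed.

Lemma jac_dot a b c d :
  dot (br a c) (br b d) - dot (br a d) (br b c) = dot (br a b) (br c d).
Proof.
rewrite !adinv -dotBr; congr (dot a _).
have J := jacobi c b d.
rewrite (brC d c) brNr (brC c b) brNr in J.
move/eqP: J; rewrite addr_eq0 opprK subr_eq => /eqP ->.
by rewrite addrC addKr.
Qed.

End Br.


Section LC.
Variables (R : realType) (n : nat) (br : 'rV[R]_n -> 'rV[R]_n -> 'rV[R]_n).
Hypothesis hL : is_lie_bracket br.
Hypothesis hI : ad_invariant br.
Variables (Q P : 'M[R]_n).
Hypothesis hQs : Q^T = Q.
Hypothesis hQP : Q *m P = 1%:M.
Hypothesis hPQ : P *m Q = 1%:M.
Hypothesis hiQ : invmx Q = P.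
Implicit Types (x y z u v w A B X Y : 'rV[R]_n).

Lemma ipQE u v : ipQ Q u v = dot (u *m Q) v.
Proof. by []. Qed.

Lemma LC_E X Y : levi_civita Q br X Y =
  (1/2) *: (br X Y + (br Y (X *m Q) + br X (Y *m Q)) *m P).
Proof.
rewrite /levi_civita hiQ.
have -> : (\row_j ((ipQ Q (br X Y) (delta_mx 0 j) - ipQ Q (br Y (delta_mx 0 j)) X
            + ipQ Q (br (delta_mx 0 j) X) Y) / 2))
   = (1/2) *: (br X Y *m Q + br Y (X *m Q) + br X (Y *m Q)).
  apply/rowP => j; rewrite !mxE !ipQE.
  rewrite [dot (br X Y *m Q) _]dotC dot_delta.
  rewrite dotMl hQs (brC hL Y) dotNl adinv // dot_delta.
  rewrite dotMl hQs adinv // dot_delta.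
  by rewrite !mxE opprK mulrC mul1r.
by rewrite -scalemxAl !mulmxDl -mulmxA hQP mulmx1 addrA.
Qed.

Lemma gLC U W V : dot (levi_civita Q br U W *m Q) V =
  (1/2) * (dot (br U W) (V *m Q) + dot (br W (U *m Q)) V + dot (br U (W *m Q)) V).
Proof.
rewrite LC_E -scalemxAl dotZl mulmxDl -mulmxA hPQ mulmx1.
by rewrite !dotDl dotMl hQs addrA.
Qed.


Lemma swap3 y c x : dot (br y c) x = dot c (br x y).
Proof. by rewrite (brC hL y) dotNl (adinv hI) -dotNr -(brC hL). Qed.

Lemma curv_num X Y :
  ipQ Q (curv Q br X Y Y) X =
    dot (br Y (Y *m Q) *m P) (br (X *m Q) X)
  + 1/4 * dot ((br Y (X *m Q) + br X (Y *m Q)) *m P) (br Y (X *m Q) + br X (Y *m Q))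
  - 3/4 * dot (br X Y *m Q) (br X Y)
  - 1/2 * dot (br X Y) (br Y (X *m Q) - br X (Y *m Q)).
Proof.
set A := X *m Q; set B := Y *m Q; set Z := br X Y.
set S := br Y A + br X B.
rewrite ipQE /curv !mulmxBl !dotBl !gLC.
have W1E : levi_civita Q br Y Y = br Y B *m P.
  rewrite LC_E brxx // add0r mulmxDl.
  by rewrite scalerDr -scalerDl (_ : 1/2 + 1/2 = 1 :> R) ?scale1r //; lra.
have W2E : levi_civita Q br X Y = (1/2) *: (Z + S *m P) by rewrite LC_E.
rewrite W1E -mulmxA hPQ mulmx1.
rewrite -/A (swap3 X) (adinv hI (br Y B *m P)) (swap3 X (br Y B)) brxx // dot0r addr0.
rewrite W2E -/B -/Z.
rewrite (swap3 Y) (adinv hI _ B) (swap3 Y) -/Z.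
rewrite (brC hL A Y) (brC hL B X) !dotNr.
rewrite (adinv hI Z) (swap3 Y) -/Z (adinv hI Z B) (brC hL B X) dotNr.
rewrite -scalemxAl (mulmxDl Z (S *m P) Q) -(mulmxA S P Q) hPQ mulmx1 !dotZl !dotDl (dotC (br Y A) Z) (dotC (br X B) Z).
rewrite /S !mulmxDl !dotDl !dotDr ?dotNr.
by field. Qed.

End LC.


Section Num.
Variables (R : realType) (n : nat) (br : 'rV[R]_n -> 'rV[R]_n -> 'rV[R]_n).
Hypothesis hL : is_lie_bracket br.
Hypothesis hI : ad_invariant br.
Variables (Q Psi : 'M[R]_n) (t : R).
Let P := 1%:M - t *: Psi.
Hypothesis hPs : Psi^T = Psi.
Hypothesis hQs : Q^T = Q.
Hypothesis hQP : Q *m P = 1%:M.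
Hypothesis hPQ : P *m Q = 1%:M.
Hypothesis hiQ : invmx Q = P.
Implicit Types (x y z u v w A B X Y : 'rV[R]_n).

Lemma mulP x : x *m P = x - t *: (x *m Psi).
Proof. by rewrite /P mulmxBr mulmx1 -scalemxAr. Qed.

Lemma Qexp x : x *m Q = x + t *: (x *m Psi) + t^+2 *: (x *m Psi *m Q *m Psi).
Proof.
have h1 : forall y, y *m Q = y + t *: (y *m Psi *m Q).
  move=> y; have := congr1 (mulmx y) hPQ.
  rewrite mulmx1 mulmxA mulP mulmxBl -scalemxAl.
  by move/eqP; rewrite subr_eq => /eqP.
have h2 : forall y, y *m Q = y + t *: (y *m Q *m Psi).
  move=> y; have := congr1 (mulmx y) hQP.
  rewrite mulmx1 mulmxA mulP.
  by move/eqP; rewrite subr_eq => /eqP.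
rewrite {1}h1 -addrA; congr (_ + _).
by rewrite {1}h2 scalerDr scalerA -expr2.
Qed.


Lemma ZQ_E x : dot (x *m Q) x =
  dot x x + t * dot (x *m Psi) x + t^+2 * dot (x *m Psi *m Q) (x *m Psi).
Proof.
rewrite Qexp !dotDl !dotZl; congr (_ + _ + _ * _).
by rewrite dotMl hPs.
Qed.

Lemma dPsiC x y : dot (x *m Psi) y = dot (y *m Psi) x.
Proof. by rewrite dotMl hPs dotC. Qed.

Lemma jac_var A B al be :
  dot (br be B) (br A al) = dot (br al B) (br A be) - dot (br A B) (br al be).
Proof.
have J := jac_dot hL hI A B al be.
rewrite (brC hL be B) dotNl; rewrite (brC hL B al) dotNr in J.
rewrite [dot (br B be) _]dotC [dot (br A be) _]dotC in J *.
lra.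
Qed.

Lemma num_formula X Y A B : X *m Q = A -> Y *m Q = B ->
  ipQ Q (curv Q br X Y Y) X =
  1/4 * dot (br A B) (br A B)
  - 3/2 * t^+2 * dot (br A B) (br (A *m Psi) (B *m Psi))
  + t^+3 * dot (br (A *m Psi) B + br A (B *m Psi)) (br (A *m Psi) (B *m Psi))
  - 3/4 * t^+4 * dot (br (A *m Psi) (B *m Psi)) (br (A *m Psi) (B *m Psi))
  - 3/4 * t * dot (br X Y *m Psi) (br X Y)
  - 3/4 * t^+2 * dot (br X Y *m Psi *m Q) (br X Y *m Psi)
  - t^+3 * dot (br (B *m Psi) B *m Psi) (br A (A *m Psi))
  - 1/4 * t^+3 * dot ((br (A *m Psi) B - br A (B *m Psi)) *m Psi)
                      (br (A *m Psi) B - br A (B *m Psi)).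
Proof.
move=> hA hB.
have hX : X = A - t *: (A *m Psi).
  by rewrite -mulP -hA -mulmxA hQP mulmx1.
have hY : Y = B - t *: (B *m Psi).
  by rewrite -mulP -hB -mulmxA hQP mulmx1.
rewrite (curv_num hL hI hQs hQP hPQ hiQ) hA hB ZQ_E.
set ze := br X Y *m Psi; set zq := ze *m Q; clearbody zq ze.
rewrite !mulP hX hY.
rewrite !(brBl hL, brBr hL, brZl hL, brZr hL, brxx hL) ?scaler0 ?subr0 ?sub0r.
rewrite ?(mulmxBl, mulmxDl, mulNmx, =^~scalemxAl).
set al := A *m Psi; set be := B *m Psi.
rewrite (brC hL B A) (brC hL be A).
rewrite ?(dotDl, dotDr, dotBl, dotBr, dotNl, dotNr, dotZl, dotZr, mulNmx, mulmxBl, mulmxDl, =^~scalemxAl).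
rewrite jac_var.
rewrite ?[dot (br A be) (br A B)]dotC ?[dot ((br A be) *m Psi) (br A B)]dPsiC.
rewrite ?[dot (br al B) (br A B)]dotC ?[dot ((br al B) *m Psi) (br A B)]dPsiC.
rewrite ?[dot (br al B) (br A be)]dotC ?[dot ((br al B) *m Psi) (br A be)]dPsiC.
rewrite ?[dot (br al be) (br A B)]dotC ?[dot ((br al be) *m Psi) (br A B)]dPsiC.
rewrite ?[dot (br al be) (br A be)]dotC ?[dot ((br al be) *m Psi) (br A be)]dPsiC.
rewrite ?[dot (br al be) (br al B)]dotC ?[dot ((br al be) *m Psi) (br al B)]dPsiC.
by field.
Qed.

End Num.


Section Norm.
Variables (R : realType) (n : nat).
Implicit Types (u v w x y : 'rV[R]_n).

Lemma vnorm_ge0 u : 0 <= vnorm u.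
Proof. exact: sqrtr_ge0. Qed.
Lemma vnorm_sq u : vnorm u ^+ 2 = dot u u.
Proof. by rewrite /vnorm sqr_sqrtr // dot_ge0. Qed.

Lemma CS2 u v : dot u v ^+ 2 <= dot u u * dot v v.
Proof.
have [v0|vn0] := eqVneq (dot v v) 0.
  by rewrite (dot_eq0 v0) dot0r dot0l expr0n /= mulr0.
have vp : 0 < dot v v by rewrite lt_def vn0 dot_ge0.
set s := dot u v / dot v v.
have h := dot_ge0 (u - s *: v).
rewrite dotBl !dotBr !dotZl !dotZr (dotC v u) in h.
have hs : s * dot v v = dot u v by rewrite /s divfK.
have : 0 <= (dot u u - s * dot u v) * dot v v.
  apply: mulr_ge0; last exact: dot_ge0.
  by move: h; rewrite hs; lra.
rewrite mulrBl -mulrA (mulrC (dot u v)) mulrA hs; lra.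
Qed.

Lemma CS u v : `|dot u v| <= vnorm u * vnorm v.
Proof.
rewrite /vnorm -sqrtrM ?dot_ge0 // -sqrtr_sqr ler_wsqrtr //; exact: CS2.
Qed.

Lemma vnormZ (a : R) u : vnorm (a *: u) = `|a| * vnorm u.
Proof. by rewrite /vnorm dotZl dotZr mulrA -expr2 sqrtrM ?sqrtr_sqr // sqr_ge0. Qed.

Lemma vnormN u : vnorm (- u) = vnorm u.
Proof. by rewrite /vnorm dotNl dotNr opprK. Qed.

Lemma vnormD u v : vnorm (u + v) <= vnorm u + vnorm v.
Proof.
have h0 : 0 <= vnorm u + vnorm v by rewrite addr_ge0 ?vnorm_ge0.
rewrite -(ger0_norm h0) -sqrtr_sqr /vnorm ler_wsqrtr //.
rewrite -/(vnorm u) -/(vnorm v) sqrrD !vnorm_sq dotDl !dotDr (dotC v u).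
have := CS u v; have := ler_norm (dot u v).
set d := dot u v; set a := vnorm u; set b := vnorm v; lra.
Qed.

Lemma vnormB u v : vnorm (u - v) <= vnorm u + vnorm v.
Proof. by rewrite -(vnormN v) vnormD. Qed.

Lemma vnorm0 : vnorm (0 : 'rV[R]_n) = 0.
Proof. by rewrite /vnorm dot0l sqrtr0. Qed.

Lemma vnorm_sum (I : Type) (r : seq I) (F : I -> 'rV[R]_n) :
  vnorm (\sum_(i <- r) F i) <= \sum_(i <- r) vnorm (F i).
Proof.
elim: r => [|i r IH]; first by rewrite !big_nil vnorm0.
rewrite !big_cons; apply: le_trans (vnormD _ _) _; exact: lerD.
Qed.


Lemma vnorm_delta (j : 'I_n) : vnorm (delta_mx 0 j : 'rV[R]_n) = 1.
Proof. by rewrite /vnorm dot_delta mxE !eqxx sqrtr1. Qed.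

Lemma coord_le u (j : 'I_n) : `|u 0 j| <= vnorm u.
Proof. by rewrite -dot_delta; apply: le_trans (CS _ _) _; rewrite vnorm_delta mul1r. Qed.

Lemma lin_sum (f : 'rV[R]_n -> 'rV[R]_n)
  (hf : forall (a : R) x y, f (a *: x + y) = a *: f x + f y) x :
  f x = \sum_j x 0 j *: f (delta_mx 0 j).
Proof.
have f0 : f 0 = 0.
  have := hf 1 0 0; rewrite !scale1r addr0 => H.
  by apply: (addrI (f 0)); rewrite addr0 -H.
rewrite {1}(row_sum_delta x).
elim/big_rec2: _ => [|i y1 y2 _ <-]; first by [].
by rewrite hf.
Qed.

Lemma lin_bound (f : 'rV[R]_n -> 'rV[R]_n)
  (hf : forall (a : R) x y, f (a *: x + y) = a *: f x + f y) x :
  vnorm (f x) <= (\sum_j vnorm (f (delta_mx 0 j))) * vnorm x.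
Proof.
rewrite (lin_sum hf) mulr_suml.
apply: (le_trans (vnorm_sum (index_enum 'I_n) (fun j => x 0 j *: f (delta_mx 0 j)))).
apply: ler_sum => j _; rewrite vnormZ mulrC.
by apply: ler_wpM2l; [exact: vnorm_ge0 | exact: coord_le].
Qed.

Lemma mx_bound (M : 'M[R]_n) : exists2 c, 0 <= c & forall x, vnorm (x *m M) <= c * vnorm x.
Proof.
exists (\sum_j vnorm (delta_mx 0 j *m M)); first by apply: sumr_ge0 => j _; exact: vnorm_ge0.
move=> x; apply: (lin_bound (f := fun y => y *m M)) => a y z.
by rewrite mulmxDl scalemxAl.
Qed.

Variable br : 'rV[R]_n -> 'rV[R]_n -> 'rV[R]_n.
Hypothesis hL : is_lie_bracket br.

Lemma br_bound : exists2 c, 0 <= c & forall x y, vnorm (br x y) <= c * vnorm x * vnorm y.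
Proof.
exists (\sum_i \sum_j vnorm (br (delta_mx 0 i) (delta_mx 0 j))).
  by apply: sumr_ge0 => i _; apply: sumr_ge0 => j _; exact: vnorm_ge0.
move=> x y.
have h1 := lin_bound (f := fun u => br u y) (fun a u v => brlin hL a u v y) x.
apply: le_trans h1 _.
rewrite -[X in _ <= X]mulrA [vnorm x * _]mulrC mulrA.
apply: ler_wpM2r; first exact: vnorm_ge0.
rewrite mulr_suml; apply: ler_sum => i _.
have h2 := lin_bound (f := fun u => br (delta_mx 0 i) u)
  (fun a u v => etrans (brDr hL _ _ _) (congr1 (fun w => w + _) (brZr hL a u _))) y.
exact: h2.
Qed.

End Norm.


Section Proj.
Variables (R : realType).

Lemma inj_unit m (G : 'M[R]_m) : (forall w : 'rV_m, w *m G = 0 -> w = 0) -> G \in unitmx.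
Proof.
move=> H; rewrite -row_free_unit -kermx_eq0; apply/negPn/negP => /rowV0Pn [v].
by move/sub_kermxP => /H ->; rewrite eqxx.
Qed.

Variable n : nat.

Lemma orth_mem (V : 'M[R]_n) x y : x *m V^T = 0 -> (y <= V)%MS -> dot x y = 0.
Proof.
move=> hx /submxP [D ->]; rewrite /dot trmx_mul mulmxA hx mul0mx mxE //.
Qed.

Lemma orth_of_dot (V : 'M[R]_n) x :
  (forall y : 'rV_n, (y <= V)%MS -> dot x y = 0) -> x *m V^T = 0.
Proof.
move=> H; apply/rowP => i; rewrite !mxE.
rewrite -[RHS](H _ (row_sub i V)) dotE.
by apply: eq_bigr => j _; rewrite !mxE.
Qed.

Lemma gram_unit m (B : 'M[R]_(m, n)) : row_free B -> B *m B^T \in unitmx.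
Proof.
move=> fB; apply: inj_unit => w hw.
have : w *m B = 0.
  apply: dot_eq0; rewrite /dot trmx_mul mulmxA -(mulmxA w) hw mul0mx mxE //.
by move/eqP; rewrite mulmx_free_eq0 // => /eqP.
Qed.

Lemma proj_of_base m (V : 'M[R]_n) (B : 'M[R]_(m, n)) :
  row_free B -> (V <= B)%MS -> (B <= V)%MS -> exists pi : 'M[R]_n,
  forall u : 'rV_n, (u *m pi <= V)%MS /\ (u - u *m pi) *m V^T = 0.
Proof.
move=> fB /submxP [D hD] BV; have Gu := gram_unit fB.
exists (B^T *m invmx (B *m B^T) *m B) => u; split.
  by rewrite mulmxA (submx_trans (submxMl _ _)).
have e : u *m B^T *m invmx (B *m B^T) *m B *m B^T = u *m B^T.
  by rewrite -(mulmxA _ B) -mulmxA mulVmx // mulmx1.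
by rewrite hD trmx_mul mulmxBl !mulmxA e subrr.
Qed.

Lemma proj_exists (V : 'M[R]_n) : exists pi : 'M[R]_n,
  forall u : 'rV_n, (u *m pi <= V)%MS /\ (u - u *m pi) *m V^T = 0.
Proof.
by apply: (proj_of_base (row_base_free V)); rewrite eq_row_base.
Qed.

End Proj.


Section Struct.
Variables (R : realType) (n : nat) (br : 'rV[R]_n -> 'rV[R]_n -> 'rV[R]_n).
Hypothesis hL : is_lie_bracket br.
Hypothesis hI : ad_invariant br.
Variables (h k Psi : 'M[R]_n).
Hypothesis hk : subalgebra br k.
Hypothesis hhk : (h <= k)%MS.
Hypothesis hPs : Psi^T = Psi.
Hypothesis hs : forall x, in_s k x -> x *m Psi = 0.
Implicit Types (x y z u v w a b A B : 'rV[R]_n).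

Lemma psi_img u : (u *m Psi <= k)%MS.
Proof.
have [pi Hpi] := proj_exists k.
set y := u *m Psi; have [Hy Hr] := Hpi y.
set r := y - y *m pi.
have rP : r *m Psi = 0 by apply: hs.
have e1 : dot y r = 0 by rewrite /y dotMl hPs rP dot0r.
have e2 : dot (y *m pi) r = 0 by rewrite dotC; apply: (orth_mem Hr).
have : dot r r = 0 by rewrite {1}/r dotBl e1 e2 subrr.
by move/dot_eq0 => /eqP; rewrite subr_eq0 => /eqP ->.
Qed.

Lemma orth_br a s : (a <= k)%MS -> orthsp k s -> orthsp k (br a s).
Proof.
move=> ak sk; apply: orth_of_dot => y yk.
by rewrite (brC hL) dotNl (adinv hI) (orth_mem sk (hk ak yk)) oppr0.
Qed.

Lemma orth_br2 a s : (a <= k)%MS -> orthsp k s -> orthsp k (br s a).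
Proof.
move=> ak sk; rewrite (brC hL) /orthsp mulNmx.
by rewrite (orth_br ak sk) oppr0.
Qed.

Lemma orthD x y : orthsp k x -> orthsp k y -> orthsp k (x + y).
Proof. by rewrite /orthsp mulmxDl => -> ->; rewrite addr0. Qed.
Lemma orthN x : orthsp k x -> orthsp k (- x).
Proof. by rewrite /orthsp mulNmx => ->; rewrite oppr0. Qed.

Lemma orth_dot x y : orthsp k x -> (y <= k)%MS -> dot x y = 0.
Proof. exact: orth_mem. Qed.
Lemma orth_dot2 x y : orthsp k x -> (y <= k)%MS -> dot y x = 0.
Proof. by move=> *; rewrite dotC orth_dot. Qed.

Lemma decomp A : in_p h A -> exists a, [/\ (a <= k)%MS, orthsp k (A - a)
   & is_oproj (in_m h k) A a].
Proof.
move=> hA; have [pi Hpi] := proj_exists k; have [ak xk] := Hpi A.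
exists (A *m pi); split => //.
have /submxP [D hD] := hhk.
have xh : (A - A *m pi) *m h^T = 0 by rewrite hD trmx_mul mulmxA xk mul0mx.
split.
  split => //; rewrite /orthsp.
  by move: xh; rewrite mulmxBl hA sub0r => /eqP; rewrite oppr_eq0 => /eqP.
by move=> z [zk _]; apply: orth_mem xk zk.
Qed.

End Struct.


Section Wedge.
Variables (R : realType) (n : nat).
Implicit Types (a b : 'rV[R]_n).

Lemma wedge_decomp a b : exists (l : R) (b' : 'rV[R]_n),
  b = b' + l *: a /\ vnorm a * vnorm b' = wedge_norm a b.
Proof.
have [a0|an0] := eqVneq (dot a a) 0.
  exists 0, b; rewrite scale0r addr0; split => //.
  by rewrite (dot_eq0 a0) vnorm0 mul0r /wedge_norm !dot0l mul0r expr0n /= subr0 sqrtr0.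
exists (dot a b / dot a a), (b - (dot a b / dot a a) *: a); split; first by rewrite subrK.
rewrite /vnorm -sqrtrM ?dot_ge0 // /wedge_norm; congr Num.sqrt.
rewrite dotBl !dotBr !dotZl !dotZr (dotC b a); field; exact: an0.
Qed.

End Wedge.

Section Inv.
Variables (R : realType) (n : nat) (br : 'rV[R]_n -> 'rV[R]_n -> 'rV[R]_n).
Hypothesis hL : is_lie_bracket br.
Variables (Psi : 'M[R]_n).
Hypothesis hPs : Psi^T = Psi.
Implicit Types (a b : 'rV[R]_n).

Definition Lp a b :=
  dot (br (b *m Psi) b *m Psi) (br a (a *m Psi))
  + 1/4 * dot ((br (a *m Psi) b - br a (b *m Psi)) *m Psi) (br (a *m Psi) b - br a (b *m Psi)).

Lemma dPsiC' x y : dot (x *m Psi) y = dot (y *m Psi) x.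
Proof. by rewrite dotMl hPs dotC. Qed.

Lemma Lp_inv a b (l : R) : Lp a (b + l *: a) = Lp a b.
Proof.
rewrite /Lp !(mulmxDl, =^~scalemxAl, brDl hL, brDr hL, brZl hL, brZr hL).
rewrite (brC hL a (a *m Psi)) (brC hL (b *m Psi) a).
rewrite ?(mulmxDl, mulmxBl, mulNmx, =^~scalemxAl).
rewrite ?(dotDl, dotDr, dotBl, dotBr, dotNl, dotNr, dotZl, dotZr).
set c := br (a *m Psi) a; set p := br (a *m Psi) b; set q := br a (b *m Psi).
rewrite ?[dot (c *m Psi) p]dPsiC' ?[dot (c *m Psi) q]dPsiC' ?[dot (q *m Psi) p]dPsiC'.
by field.
Qed.

End Inv.


Section Bounds.
Variables (R : realType) (n : nat) (br : 'rV[R]_n -> 'rV[R]_n -> 'rV[R]_n).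
Hypothesis hL : is_lie_bracket br.
Variables (Psi : 'M[R]_n) (Mb Mp : R).
Hypothesis hPs : Psi^T = Psi.
Hypothesis Mb0 : 0 <= Mb.
Hypothesis Mp0 : 0 <= Mp.
Hypothesis hMb : forall x y, vnorm (br x y) <= Mb * vnorm x * vnorm y.
Hypothesis hMp : forall x, vnorm (x *m Psi) <= Mp * vnorm x.
Implicit Types (a b x y : 'rV[R]_n).

Lemma dotPsi_le x y : `|dot (x *m Psi) y| <= Mp * vnorm x * vnorm y.
Proof.
apply: le_trans (CS _ _) _; apply: ler_wpM2r; first exact: vnorm_ge0.
exact: hMp.
Qed.

Lemma brPsi_le x y : vnorm (br (x *m Psi) y) <= Mb * Mp * (vnorm x * vnorm y).
Proof.
apply: le_trans (hMb _ _) _; rewrite -!mulrA; apply: ler_wpM2l => //.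
rewrite !mulrA; apply: ler_wpM2r; first exact: vnorm_ge0.
exact: hMp.
Qed.

Lemma brPsi_le2 x y : vnorm (br x (y *m Psi)) <= Mb * Mp * (vnorm x * vnorm y).
Proof.
apply: le_trans (hMb _ _) _; rewrite -!mulrA; apply: ler_wpM2l => //.
rewrite mulrCA; apply: ler_wpM2l; first exact: vnorm_ge0.
exact: hMp.
Qed.

Lemma w_bound a b : vnorm (br (a *m Psi) (b *m Psi)) <= Mb * Mp * Mp * wedge_norm a b.
Proof.
have [l [b' [-> <-]]] := wedge_decomp a b.
rewrite mulmxDl -scalemxAl (brDr hL) (brZr hL) (brxx hL) scaler0 addr0.
apply: le_trans (hMb _ _) _; rewrite -!mulrA; apply: ler_wpM2l => //.
have h1 := hMp a; have h2 := hMp b'.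
have := vnorm_ge0 (a *m Psi); have := vnorm_ge0 (b' *m Psi).
have := vnorm_ge0 a; have := vnorm_ge0 b'. nra.
Qed.

Lemma v0_bound a b : vnorm (br (a *m Psi) b + br a (b *m Psi)) <= 2 * Mb * Mp * wedge_norm a b.
Proof.
have [l [b' [-> <-]]] := wedge_decomp a b.
rewrite mulmxDl -scalemxAl !(brDr hL) !(brZr hL) (brC hL a (a *m Psi)) scalerN.
rewrite addrAC -!addrA addNr addr0.
apply: le_trans (vnormD _ _) _.
have := brPsi_le a b'; have := brPsi_le2 a b'. lra.
Qed.

Lemma Lp_bound a b : `|Lp br Psi a b| <= 2 * Mp * Mp * Mp * Mb * Mb * wedge_norm a b ^+ 2.
Proof.
have [l [b' [-> <-]]] := wedge_decomp a b.
rewrite (Lp_inv hL hPs) /Lp.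
set u := br (a *m Psi) b' - br a (b' *m Psi).
have hu : vnorm u <= 2 * (Mb * Mp * (vnorm a * vnorm b')).
  apply: le_trans (vnormB _ _) _; have := brPsi_le a b'; have := brPsi_le2 a b'; lra.
have h1 := dotPsi_le (br (b' *m Psi) b') (br a (a *m Psi)).
have h2 := dotPsi_le u u.
have h3 := brPsi_le b' b'; have h4 := brPsi_le2 a a.
have := vnorm_ge0 a; have := vnorm_ge0 b'; have := vnorm_ge0 u.
have := vnorm_ge0 (br (b' *m Psi) b'); have := vnorm_ge0 (br a (a *m Psi)).
set A := vnorm a; set B := vnorm b'; set U := vnorm u.
set E := vnorm (br (b' *m Psi) b'); set F := vnorm (br a (a *m Psi)).
set d1 := dot (br (b' *m Psi) b' *m Psi) (br a (a *m Psi)).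
set d2 := dot (u *m Psi) u.
move=> U0 F0 E0 B0 A0.
have hEF : E * F <= (Mb * Mp * (B * B)) * (Mb * Mp * (A * A)) by apply: ler_pM.
have hUU : U * U <= (2 * (Mb * Mp * (A * B))) * (2 * (Mb * Mp * (A * B))) by apply: ler_pM.
have e1 : `|d1| <= Mp * (Mb * Mp * (B * B)) * (Mb * Mp * (A * A)).
  apply: le_trans h1 _; rewrite -mulrA -[X in _ <= X]mulrA; exact: ler_wpM2l.
have e2 : `|d2| <= Mp * ((2 * (Mb * Mp * (A * B))) * (2 * (Mb * Mp * (A * B)))).
  apply: le_trans h2 _; rewrite -mulrA; exact: ler_wpM2l.
apply: le_trans (ler_normD _ _) _.
rewrite normrM [`|1/4|]ger0_norm; last lra.
have -> : 2 * Mp * Mp * Mp * Mb * Mb * (A * B) ^+ 2 =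
  Mp * (Mb * Mp * (B * B)) * (Mb * Mp * (A * A)) +
  1/4 * (Mp * ((2 * (Mb * Mp * (A * B))) * (2 * (Mb * Mp * (A * B))))) by field.
apply: lerD => //; apply: ler_wpM2l => //; lra.
Qed.

End Bounds.


Section Aux.
Variables (R : realType) (n : nat).

Lemma psd_CS (M : 'M[R]_n) : M^T = M -> posdef M -> forall u v : 'rV[R]_n,
  dot (u *m M) v ^+ 2 <= dot (u *m M) u * dot (v *m M) v.
Proof.
move=> hMs hpos u v.
have f_ge0 : forall x : 'rV[R]_n, 0 <= dot (x *m M) x.
  move=> x; have [->|xn0] := eqVneq x 0; first by rewrite mul0mx dot0l.
  by apply: ltW; exact: hpos.
have fC : forall x y : 'rV[R]_n, dot (x *m M) y = dot (y *m M) x.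
  by move=> x y; rewrite dotMl hMs dotC.
have [->|vn0] := eqVneq v 0; first by rewrite mul0mx !dot0l dot0r expr0n /= mulr0.
have vp : 0 < dot (v *m M) v by exact: hpos.
set s := dot (u *m M) v / dot (v *m M) v.
have h := f_ge0 (u - s *: v).
rewrite mulmxBl -scalemxAl dotBl !dotBr !dotZl !dotZr (fC v u) in h.
have hs : s * dot (v *m M) v = dot (u *m M) v by rewrite /s divfK // gt_eqF.
have : 0 <= (dot (u *m M) u - s * dot (u *m M) v) * dot (v *m M) v.
  apply: mulr_ge0; last exact: ltW.
  by move: h; rewrite hs; lra.
rewrite mulrBl -mulrA (mulrC (dot (u *m M) v)) mulrA hs; lra.
Qed.

Lemma tpow_le (t x y : R) (m : nat) : 0 <= t -> t <= 1 -> `|x| <= y ->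
  `|t ^+ m.+1 * x| <= t * y.
Proof.
move=> t0 t1 hxy; have y0 : 0 <= y by apply: le_trans hxy.
rewrite normrM ger0_norm ?exprn_ge0 // exprS -mulrA; apply: ler_wpM2l => //.
have tm : t ^+ m <= 1 by exact: exprn_ile1.
by have := ler_pM (exprn_ge0 m t0) (normr_ge0 x) tm hxy; rewrite mul1r.
Qed.

End Aux.

Unset Implicit Arguments. Set Strict Implicit. Set Printing Implicit Defensive.

Theorem proposition4p1 (R : realType) (n : nat)
  (br : 'rV[R]_n -> 'rV[R]_n -> 'rV[R]_n) (h k : 'M[R]_n) (AdH : set 'M[R]_n)
  (Psi : 'M[R]_n) :
  is_lie_bracket br -> ad_invariant br ->
  subalgebra br h -> subalgebra br k -> (h <= k)%MS ->
  is_AdH br h k AdH ->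
  (exists2 C : R, 0 < C & forall X Y Xm Ym : 'rV[R]_n,
     in_p h X -> in_p h Y ->
     is_oproj (in_m h k) X Xm -> is_oproj (in_m h k) Y Ym ->
     wedge_norm Xm Ym <= C * vnorm (br X Y)) ->
  Psi^T = Psi ->
  (forall a, AdH a -> a *m Psi = Psi *m a) ->
  (forall x, in_s k x -> x *m Psi = 0) ->
  (forall x : 'rV[R]_n, (x <= h)%MS -> x *m Psi = 0) ->
  exists2 eps : R, 0 < eps & forall t : R, 0 <= t -> t < eps ->
    posdef (1%:M - t *: Psi) ->
    forall X Y : 'rV[R]_n, in_p h X -> in_p h Y -> row_free (col_mx X Y : 'M[R]_(2, n)) ->
      0 <= sec_curv (gt_mx Psi t) br X Y.
Proof.
move=> hL hI hh hk hhk _ [C C0 HC] hPs _ hs hhz.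
have [Mb Mb0 hMb] := br_bound hL.
have [Mp Mp0 hMp] := mx_bound Psi.
pose Mw := Mb * Mp * Mp.
pose S := 1 + 2 * Mb * Mp * C + Mw * C.
pose KL := 2 * Mp * Mp * Mp * Mb * Mb.
pose Kc := 3/2 * (Mw * C) + (2 * Mb * Mp * C) * (Mw * C) + 3/4 * (Mw * C) ^+ 2
  + 3/4 * Mp * S ^+ 2 + 3/2 * Mp ^+ 2 * S ^+ 2 + KL * C ^+ 2.
have Mw0 : 0 <= Mw by rewrite /Mw !mulr_ge0.
have S0 : 1 <= S by rewrite /S; have := mulr_ge0 (mulr_ge0 (mulr_ge0 (ler0n R 2) Mb0) Mp0) (ltW C0); have := mulr_ge0 Mw0 (ltW C0); lra.
have KL0 : 0 <= KL by rewrite /KL !mulr_ge0.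
have Kc0 : 0 <= Kc.
  rewrite /Kc.
  have := mulr_ge0 Mw0 (ltW C0); have := mulr_ge0 (mulr_ge0 (mulr_ge0 (ler0n R 2) Mb0) Mp0) (ltW C0).
  have := sqr_ge0 (Mw * C); have := mulr_ge0 Mp0 (sqr_ge0 S); have := mulr_ge0 (sqr_ge0 Mp) (sqr_ge0 S).
  have := mulr_ge0 KL0 (sqr_ge0 C); nra.
pose D := 4 * Kc + 2 * Mp + 1.
have D0 : 0 < D by rewrite /D; lra.
exists (1 / D); first by rewrite divr_gt0.
move=> t t0 teps hpos X Y hX hY _.
have tD : t * D < 1 by rewrite -ltr_pdivlMr.
have t1 : t <= 1 by move: tD; rewrite /D; nra.
have tMp : t * Mp <= 1/2 by move: tD; rewrite /D; nra.
have tK : 4 * (t * Kc) <= 1 by move: tD; rewrite /D; nra.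
set P := 1%:M - t *: Psi.
have PT : P^T = P by rewrite /P linearB /= linearZ /= trmx1 hPs.
have Pu : P \in unitmx.
  apply: inj_unit => w hw; apply/eqP; apply/negPn/negP => wn0.
  by have := hpos w wn0; rewrite hw mul0mx mxE ltxx.
set Q := gt_mx Psi t.
have hQP : Q *m P = 1%:M by rewrite /Q /gt_mx mulVmx.
have hPQ : P *m Q = 1%:M by rewrite /Q /gt_mx mulmxV.
have hQs : Q^T = Q by rewrite /Q /gt_mx trmx_inv PT.
have hiQ : invmx Q = P by rewrite /Q /gt_mx invmxK.
set A := X *m Q; set B := Y *m Q.
have mulP : forall x : 'rV[R]_n, x *m P = x - t *: (x *m Psi).
  by move=> x; rewrite /P mulmxBr mulmx1 -scalemxAr.
have hXA : X = A - t *: (A *m Psi) by rewrite -mulP /A -mulmxA hQP mulmx1.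
have hYB : Y = B - t *: (B *m Psi) by rewrite -mulP /B -mulmxA hQP mulmx1.
have psi_h : forall u : 'rV[R]_n, orthsp h (u *m Psi).
  move=> u; apply: orth_of_dot => y yh; by rewrite dotMl hPs hhz // dot0r.
have hAp : in_p h A.
  rewrite /in_p /orthsp; have -> : A = X + t *: (A *m Psi) by rewrite hXA subrK.
  by rewrite mulmxDl -scalemxAl hX psi_h scaler0 addr0.
have hBp : in_p h B.
  rewrite /in_p /orthsp; have -> : B = Y + t *: (B *m Psi) by rewrite hYB subrK.
  by rewrite mulmxDl -scalemxAl hY psi_h scaler0 addr0.
rewrite /sec_curv; apply: divr_ge0; last first.
  rewrite !ipQE -/A -/B.
  have eX : A *m P = X by rewrite /A -mulmxA hQP mulmx1.
  have eY : B *m P = Y by rewrite /B -mulmxA hQP mulmx1.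
  have key : forall a b : 'rV[R]_n,
      0 <= dot a (a *m P) * dot b (b *m P) - dot a (b *m P) ^+ 2.
    by move=> a b; rewrite !dotMr PT subr_ge0; exact: psd_CS.
  by have := key A B; rewrite eX eY.
rewrite (num_formula hL hI hPs hQs hQP hPQ hiQ (erefl A) (erefl B)).
have [a [ak xak hpa]] := decomp hhk hAp.
have [b [bk xbk hpb]] := decomp hhk hBp.
have hW := HC A B a b hAp hBp hpa hpb.
have rA : A *m Psi = a *m Psi.
  by apply/eqP; rewrite -subr_eq0 -mulmxBl hs.
have rB : B *m Psi = b *m Psi.
  by apply/eqP; rewrite -subr_eq0 -mulmxBl hs.
have eA : A = a + (A - a) by rewrite addrC subrK.
have eB : B = b + (B - b) by rewrite addrC subrK.
rewrite rA rB.
have hXY : br X Y = (br A B - t *: (br (a *m Psi) b + br a (b *m Psi)) + t ^+ 2 *: br (a *m Psi) (b *m Psi))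
   - t *: (br (a *m Psi) (B - b) + br (A - a) (b *m Psi)).
  rewrite {1}hXA {1}hYB rA rB.
  rewrite !(brBl hL, brBr hL, brZl hL, brZr hL).
  by apply/rowP => j; rewrite !mxE; ring.
set al := a *m Psi; set be := b *m Psi.
have alk : (al <= k)%MS by exact: psi_img.
have bek : (be <= k)%MS by exact: psi_img.
have wk : (br al be <= k)%MS by exact: hk.
have xak' : orthsp k (A - a) := xak.
have ok : orthsp k (br al (B - b) + br (A - a) be).
  by apply: orthD; [exact: (orth_br hL hI hk alk xbk) | exact: (orth_br2 hL hI hk bek xak)].
have ok2 : orthsp k (br al (B - b) - br (A - a) be).
  by apply: orthD; [exact: (orth_br hL hI hk alk xbk) | apply: orthN; exact: (orth_br2 hL hI hk bek xak)].
have oPsi := hs _ ok.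
have oPsi2 := hs _ ok2.
have E1 : dot (br al B + br A be) (br al be) = dot (br al b + br a be) (br al be).
  have -> : br al B + br A be = (br al b + br a be) + (br al (B - b) + br (A - a) be).
    rewrite (brBr hL) (brBl hL); by apply/rowP => j; rewrite !mxE; ring.
  by rewrite dotDl (orth_dot ok wk) addr0.
have E2 : dot (br be B *m Psi) (br A al) = dot (br be b *m Psi) (br a al).
  have -> : br be B = br be b + br be (B - b) by rewrite (brBr hL) addrC subrK.
  rewrite mulmxDl (hs _ (orth_br hL hI hk bek xbk)) addr0.
  have -> : br A al = br a al + br (A - a) al by rewrite (brBl hL) addrC subrK.
  by rewrite dotDr (orth_dot2 (orth_br2 hL hI hk alk xak) (psi_img hPs hs _)) addr0.
have E3 : dot ((br al B - br A be) *m Psi) (br al B - br A be) =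
          dot ((br al b - br a be) *m Psi) (br al b - br a be).
  have -> : br al B - br A be = (br al b - br a be) + (br al (B - b) - br (A - a) be).
    rewrite (brBr hL) (brBl hL); by apply/rowP => j; rewrite !mxE; ring.
  by rewrite mulmxDl oPsi2 addr0 dotDr (orth_dot2 ok2 (psi_img hPs hs _)) addr0.
set Z0 := br A B - t *: (br al b + br a be) + t ^+ 2 *: br al be.
have EZ0 : br X Y *m Psi = Z0 *m Psi.
  by rewrite hXY mulmxBl -scalemxAl oPsi scaler0 subr0.
have EZ1 : dot (br X Y *m Psi) (br X Y) = dot (Z0 *m Psi) Z0.
  rewrite EZ0 hXY dotBr dotZr (orth_dot2 ok (psi_img hPs hs _)).
  by rewrite mulr0 subr0.
rewrite E1 E2 E3 EZ1 EZ0.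
have hLp := Lp_bound hL hPs Mb0 Mp0 hMb hMp a b; rewrite /Lp -/al -/be in hLp.
have hw := w_bound hL Mb0 hMb hMp a b; rewrite -/al -/be -/Mw in hw.
have hv := v0_bound hL Mb0 hMb hMp a b; rewrite -/al -/be in hv.
set z := br A B; set w := br al be; set v0 := br al b + br a be.
set d := wedge_norm a b; set nz := vnorm z.
have d0 : 0 <= d by exact: sqrtr_ge0.
have nz0 : 0 <= nz by exact: vnorm_ge0.
have w0 : 0 <= vnorm w by exact: vnorm_ge0.
have v00 : 0 <= vnorm v0 by exact: vnorm_ge0.
have hw' : vnorm w <= Mw * C * nz.
  apply: le_trans hw _; rewrite -mulrA; exact: ler_wpM2l.
have hv' : vnorm v0 <= 2 * Mb * Mp * C * nz.
  apply: le_trans hv _; rewrite -[X in _ <= X]mulrA; apply: ler_wpM2l => //.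
  by rewrite !mulr_ge0.
have dzz : dot z z = nz ^+ 2 by rewrite vnorm_sq.
have b1 : `|dot z w| <= (Mw * C) * nz ^+ 2.
  apply: le_trans (CS _ _) _; rewrite -/nz.
  rewrite (_ : Mw * C * nz ^+ 2 = nz * (Mw * C * nz)); last by ring.
  exact: ler_wpM2l.
have b2 : `|dot v0 w| <= ((2 * Mb * Mp * C) * (Mw * C)) * nz ^+ 2.
  apply: le_trans (CS _ _) _.
  rewrite (_ : 2 * Mb * Mp * C * (Mw * C) * nz ^+ 2 = (2 * Mb * Mp * C * nz) * (Mw * C * nz)); last by ring.
  exact: (ler_pM v00 w0 hv' hw').
have b3 : `|dot w w| <= (Mw * C) ^+ 2 * nz ^+ 2.
  rewrite -vnorm_sq ger0_norm ?sqr_ge0 // -exprMn !expr2.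
  exact: ler_pM.
have hZ0 : vnorm Z0 <= S * nz.
  apply: le_trans (vnormD _ _) _; apply: le_trans (lerD (vnormB _ _) (lexx _)) _.
  rewrite !vnormZ ger0_norm // ger0_norm ?exprn_ge0 //.
  have t2 : t ^+ 2 <= 1 by exact: exprn_ile1.
  have := ler_pM t0 v00 t1 hv'; have := ler_pM (exprn_ge0 2 t0) w0 t2 hw'.
  rewrite /S -/v0 -/w -/z -/nz; lra.
have Z00 : 0 <= vnorm Z0 by exact: vnorm_ge0.
have SZ : vnorm Z0 ^+ 2 <= S ^+ 2 * nz ^+ 2.
  by rewrite -exprMn !expr2; apply: ler_pM.
have b4 : `|dot (Z0 *m Psi) Z0| <= (Mp * S ^+ 2) * nz ^+ 2.
  apply: le_trans (dotPsi_le hMp _ _) _; rewrite -mulrA -expr2 -mulrA.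
  exact: ler_wpM2l.
have Qb : forall y : 'rV[R]_n, vnorm (y *m Q) <= 2 * vnorm y.
  move=> y; have ey : y = y *m Q - t *: (y *m Q *m Psi).
    by rewrite -mulP -mulmxA hQP mulmx1.
  have h1 : vnorm (y *m Q) <= vnorm y + t * (Mp * vnorm (y *m Q)).
    rewrite {1}(_ : y *m Q = y + t *: (y *m Q *m Psi)); last by rewrite {2}ey subrK.
    apply: le_trans (vnormD _ _) _; rewrite vnormZ ger0_norm //.
    by apply: lerD => //; apply: ler_wpM2l.
  have := vnorm_ge0 (y *m Q); have := vnorm_ge0 y; nra.
have b5 : `|dot (Z0 *m Psi *m Q) (Z0 *m Psi)| <= (2 * Mp ^+ 2 * S ^+ 2) * nz ^+ 2.
  apply: le_trans (CS _ _) _.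
  have hP1 := hMp Z0; have hP0 := vnorm_ge0 (Z0 *m Psi).
  have := Qb (Z0 *m Psi); have := vnorm_ge0 (Z0 *m Psi *m Q).
  have PP : vnorm (Z0 *m Psi) ^+ 2 <= (Mp * vnorm Z0) ^+ 2.
    by rewrite !expr2; apply: ler_pM.
  rewrite exprMn in PP.
  have := ler_wpM2l (exprn_ge0 2 Mp0) SZ.
  nra.
have b6 : `|dot (br be b *m Psi) (br a al) +
     1 / 4 * dot ((br al b - br a be) *m Psi) (br al b - br a be)| <= (KL * C ^+ 2) * nz ^+ 2.
  apply: le_trans hLp _; rewrite -/KL -mulrA -exprMn; apply: ler_wpM2l => //.
  by rewrite !expr2; apply: ler_pM.
have T1 := tpow_le 1 t0 t1 b1.
have T2 := tpow_le 2 t0 t1 b2.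
have T3 := tpow_le 3 t0 t1 b3.
have T4 := tpow_le 0 t0 t1 b4.
have T5 := tpow_le 1 t0 t1 b5.
have T6 := tpow_le 2 t0 t1 b6.
rewrite expr1 in T4.
have fin : t * (3/2 * ((Mw * C) * nz ^+ 2) + ((2 * Mb * Mp * C) * (Mw * C)) * nz ^+ 2
     + 3/4 * ((Mw * C) ^+ 2 * nz ^+ 2) + 3/4 * ((Mp * S ^+ 2) * nz ^+ 2)
     + 3/4 * ((2 * Mp ^+ 2 * S ^+ 2) * nz ^+ 2) + (KL * C ^+ 2) * nz ^+ 2)
     <= 1/4 * nz ^+ 2.
  have -> : t * (3/2 * ((Mw * C) * nz ^+ 2) + ((2 * Mb * Mp * C) * (Mw * C)) * nz ^+ 2
     + 3/4 * ((Mw * C) ^+ 2 * nz ^+ 2) + 3/4 * ((Mp * S ^+ 2) * nz ^+ 2)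
     + 3/4 * ((2 * Mp ^+ 2 * S ^+ 2) * nz ^+ 2) + (KL * C ^+ 2) * nz ^+ 2)
     = (t * Kc) * nz ^+ 2 by rewrite /Kc; field.
  have := ler_wpM2r (sqr_ge0 nz) tK; lra.
rewrite dzz.
move: T1 T2 T3 T4 T5 T6 fin.
set y1 := (Mw * C) * nz ^+ 2.
set y2 := ((2 * Mb * Mp * C) * (Mw * C)) * nz ^+ 2.
set y3 := (Mw * C) ^+ 2 * nz ^+ 2.
set y4 := (Mp * S ^+ 2) * nz ^+ 2.
set y5 := (2 * Mp ^+ 2 * S ^+ 2) * nz ^+ 2.
set y6 := (KL * C ^+ 2) * nz ^+ 2.
set e1 := dot z w; set e2 := dot v0 w; set e3 := dot w w.
set e4 := dot (Z0 *m Psi) Z0; set e5 := dot (Z0 *m Psi *m Q) (Z0 *m Psi).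
set f1 := dot (br be b *m Psi) (br a al).
set f2 := dot ((br al b - br a be) *m Psi) (br al b - br a be).
move=> T1 T2 T3 T4 T5 T6 fin.
move: T1 T2 T3 T4 T5 T6; rewrite !ler_norml => /andP [T1a T1b] /andP [T2a T2b]
  /andP [T3a T3b] /andP [T4a T4b] /andP [T5a T5b] /andP [T6a T6b].
lra.
Qed.
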